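(* For all complex $x,y$, $$\sum_{n=0}^{\infty}R_n(y)\frac{x^n}{n!}=e^{y}\int_0^{y}e^{-t}I_0(2\sqrt{xt})\,dt=e^{y}\sum_{n=0}^{\infty}(-1)^nL_n(x)\frac{y^{n+1}}{(n+1)!}.$$
   Context: For an integer $n\ge 0$ and complex $y$, $R_n(y)=e^y-1-\frac{y}{1!}-\frac{y^2}{2!}-\dots-\frac{y^n}{n!}=e^y-\sum_{k=0}^n\frac{y^k}{k!}$. $I_0(2\sqrt{z})=\sum_{n\ge0}\frac{z^n}{(n!)^2}$ (an entire function of $z$). $L_n(x)=\sum_{k=0}^{n}\binom{n}{k}\frac{(-1)^kx^k}{k!}$ are the Laguerre polynomials. The integral is along the segment from $0$ to $y$. *)

(* Defs.v *)
From Stdlib Require Import Reals.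
From Coquelicot Require Import Coquelicot.
Open Scope C_scope.

Definition cexp (z : C) : C :=
  (exp (Re z) * cos (Im z), exp (Re z) * sin (Im z))%R.

Definition cfact (n : nat) : C := RtoC (INR (Factorial.fact n)).

Definition Rrem (n : nat) (y : C) : C :=
  cexp y - sum_n (fun k => y ^ k / cfact k) n.

Definition CSeries (a : nat -> C) : C :=
  (Series (fun n => Re (a n)), Series (fun n => Im (a n))).

(* The entire function z |-> I_0(2 sqrt z) = sum_{n>=0} z^n / (n!)^2. *)
Definition I0sqrt (z : C) : C :=
  CSeries (fun n => z ^ n / (cfact n * cfact n)).

Definition Laguerre (n : nat) (x : C) : C :=
  sum_n (fun k => RtoC (Binomial.C n k) * (-1) ^ k * x ^ k / cfact k) n.

(* v is the integral of g along the segment from 0 to y: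
   int_0^y g(t) dt = int_0^1 g(s y) y ds  (a real Riemann integral of a
   C-valued function, C viewed as a normed R-module). *)
Definition is_seg_integral (g : C -> C) (y : C) (v : C) : Prop :=
  is_RInt (V := C_R_NormedModule) (fun s : R => y * g (RtoC s * y)) 0%R 1%R v.

(* Main.v *)
Require Import Defs.
From Stdlib Require Import Reals Lra Lia.
From Coquelicot Require Import Coquelicot.
Open Scope C_scope.

Notation CR := C_R_NormedModule.
Ltac cring := match goal with |- @eq _ ?a ?b => change (@eq C a b) end; cbv beta; ring.
Ltac cfield := match goal with |- @eq _ ?a ?b => change (@eq C a b) end; cbv beta; field.


Lemma CR_deriv_intro (f : R -> C) x a b :
  is_derive (fun t => fst (f t)) x a -> is_derive (fun t => snd (f t)) x b ->
  is_derive (V:=CR) f x (a,b).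
Proof.
  intros Ha Hb. unfold is_derive in *.
  assert (H := filterdiff_comp'_2 (K:=R_AbsRing) (T:=R_NormedModule) (U:=R_NormedModule) (V:=R_NormedModule) (W:=CR)
    (fun t => fst (f t)) (fun t => snd (f t)) (fun u v => (u,v)) x _ _ (fun u v => (u,v)) Ha Hb).
  refine (filterdiff_ext _ _ _ _ (H _)).
  - intros t. destruct (f t); reflexivity.
  - apply filterdiff_linear. apply (is_linear_prod (K:=R_AbsRing) (T:= prod_NormedModule R_AbsRing R_NormedModule R_NormedModule) (U:=R_NormedModule) (V:=R_NormedModule)); [apply is_linear_fst|apply is_linear_snd].
Qed.

Lemma CR_deriv_fst (f : R -> C) x l :
  is_derive (V:=CR) f x l -> is_derive (fun t => fst (f t)) x (fst l).
Proof.
  intros H. unfold is_derive in *.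
  assert (H2 := filterdiff_comp' (K:=R_AbsRing) (U:=R_NormedModule) (V:=CR) (W:=R_NormedModule) f (fun t => fst t) x _ _ H
     (filterdiff_linear _ (is_linear_fst (U:=R_NormedModule) (V:=R_NormedModule)))).
  exact H2.
Qed.

Lemma CR_deriv_snd (f : R -> C) x l :
  is_derive (V:=CR) f x l -> is_derive (fun t => snd (f t)) x (snd l).
Proof.
  intros H. unfold is_derive in *.
  exact (filterdiff_comp' (K:=R_AbsRing) (U:=R_NormedModule) (V:=CR) (W:=R_NormedModule) f (fun t => snd t) x _ _ H
     (filterdiff_linear _ (is_linear_snd (U:=R_NormedModule) (V:=R_NormedModule)))).
Qed.


Lemma is_derive_eq {K : AbsRing} {V : NormedModule K} (f : K -> V) x l l' :
  is_derive f x l' -> l' = l -> is_derive f x l.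
Proof. intros H ->; exact H. Qed.

Lemma CR_deriv_mult (f g : R -> C) x df dg :
  is_derive (V:=CR) f x df -> is_derive (V:=CR) g x dg ->
  is_derive (V:=CR) (fun t => f t * g t) x (df * g x + f x * dg).
Proof.
  intros Hf Hg.
  pose proof (CR_deriv_fst _ _ _ Hf) as Hf1. pose proof (CR_deriv_snd _ _ _ Hf) as Hf2.
  pose proof (CR_deriv_fst _ _ _ Hg) as Hg1. pose proof (CR_deriv_snd _ _ _ Hg) as Hg2.
  destruct df as [a b], dg as [c d]. simpl in Hf1, Hf2, Hg1, Hg2.
  replace (((a, b) * g x + f x * (c, d))) with
     (fst ((a, b) * g x + f x * (c, d)), snd ((a, b) * g x + f x * (c, d))) by (destruct (_ + _); reflexivity).
  apply CR_deriv_intro.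
  - eapply is_derive_eq.
    + apply (is_derive_minus (K:=R_AbsRing) (V:=R_NormedModule) (fun t => (fst (f t) * fst (g t))%R) (fun t => (snd (f t) * snd (g t))%R));
      apply Derive.is_derive_mult; [apply Hf1|apply Hg1|apply Hf2|apply Hg2].
    + simpl. unfold minus, plus, opp; simpl. ring.
  - eapply is_derive_eq.
    + apply (is_derive_plus (K:=R_AbsRing) (V:=R_NormedModule) (fun t => (fst (f t) * snd (g t))%R) (fun t => (snd (f t) * fst (g t))%R));
      apply Derive.is_derive_mult; [apply Hf1|apply Hg2|apply Hf2|apply Hg1].
    + simpl. unfold plus; simpl. ring.
Qed.


Lemma CR_deriv_const (c : C) x : is_derive (V:=CR) (fun _ => c) x (RtoC 0).
Proof.
  change (RtoC 0) with (0%R, 0%R). apply CR_deriv_intro; (eapply is_derive_eq; [apply is_derive_const|reflexivity]).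
Qed.

Lemma CR_deriv_RtoC x : is_derive (V:=CR) (fun t => RtoC t) x (RtoC 1).
Proof.
  change (RtoC 1) with (1%R, 0%R). apply CR_deriv_intro.
  - apply (is_derive_ext (fun t => t)); [reflexivity|].
    eapply is_derive_eq; [apply (is_derive_id (K:=R_AbsRing))|reflexivity].
  - apply (is_derive_ext (fun _ => 0%R)); [reflexivity|].
    eapply is_derive_eq; [apply is_derive_const|reflexivity].
Qed.

Lemma CR_deriv_plus (f g : R -> C) x df dg :
  is_derive (V:=CR) f x df -> is_derive (V:=CR) g x dg ->
  is_derive (V:=CR) (fun t => f t + g t) x (df + dg).
Proof.
  intros Hf Hg. exact (is_derive_plus (V:=CR) f g x df dg Hf Hg).
Qed.

Lemma CR_deriv_opp (f : R -> C) x df :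
  is_derive (V:=CR) f x df -> is_derive (V:=CR) (fun t => - f t) x (- df).
Proof.
  intros Hf. exact (is_derive_opp (V:=CR) f x df Hf).
Qed.

Lemma CR_deriv_cmul (c : C) (f : R -> C) x df :
  is_derive (V:=CR) f x df -> is_derive (V:=CR) (fun t => c * f t) x (c * df).
Proof.
  intros Hf. eapply is_derive_eq. apply CR_deriv_mult. apply CR_deriv_const. apply Hf.
  change (@eq C (0 * f x + c * df) (c * df)). ring.
Qed.

Lemma CR_deriv_cexp (w : C) x :
  is_derive (V:=CR) (fun t => cexp (RtoC t * w)) x (w * cexp (RtoC x * w)).
Proof.
  destruct w as [a b].
  replace (((a, b) * cexp (RtoC x * (a, b)))) with
     (fst ((a, b) * cexp (RtoC x * (a, b))), snd ((a, b) * cexp (RtoC x * (a, b)))) by (destruct (_ * _); reflexivity).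
  apply CR_deriv_intro.
  - eapply is_derive_ext with (f := fun t => (exp (t*a) * cos (t * b))%R).
    { intros t. unfold cexp; simpl. rewrite !Rmult_0_l, Rminus_0_r, Rplus_0_r. reflexivity. }
    eapply is_derive_eq. auto_derive. auto. reflexivity.
    simpl. unfold cexp; simpl. replace (x * a - 0 * b)%R with (x*a)%R by ring.
    replace (x * b + 0 * a)%R with (x*b)%R by ring. ring.
  - eapply is_derive_ext with (f := fun t => (exp (t*a) * sin (t * b))%R).
    { intros t. unfold cexp; simpl. rewrite !Rmult_0_l, Rminus_0_r, Rplus_0_r. reflexivity. }
    eapply is_derive_eq. auto_derive. auto. reflexivity.
    simpl. unfold cexp; simpl. replace (x * a - 0 * b)%R with (x*a)%R by ring.
    replace (x * b + 0 * a)%R with (x*b)%R by ring. ring.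
Qed.


Lemma cfact_nz n : cfact n <> 0.
Proof.
  unfold cfact. intros H. apply RtoC_inj in H. apply (INR_fact_neq_0 n). exact H.
Qed.

Lemma cfact_S n : cfact (S n) = RtoC (INR (S n)) * cfact n.
Proof.
  unfold cfact. rewrite <- RtoC_mult. f_equal. change (Factorial.fact (S n)) with (S n * Factorial.fact n)%nat. rewrite mult_INR. reflexivity.
Qed.

Lemma CR_deriv_lin (w : C) x : is_derive (V:=CR) (fun t => RtoC t * w) x w.
Proof.
  eapply is_derive_eq. apply CR_deriv_mult. apply CR_deriv_RtoC. apply CR_deriv_const.
  change (@eq C (1 * w + RtoC x * 0) w). ring.
Qed.

Lemma CR_deriv_pow (w : C) n x :
  is_derive (V:=CR) (fun t => (RtoC t * w) ^ (S n)) x (RtoC (INR (S n)) * w * (RtoC x * w) ^ n).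
Proof.
  induction n.
  - eapply is_derive_ext with (f := fun t => RtoC t * w).
    { intros t. simpl. cring. }
    eapply is_derive_eq. apply CR_deriv_lin. change (@eq C w (RtoC 1 * w * 1)). ring.
  - eapply is_derive_ext with (f := fun t => (RtoC t * w) * (RtoC t * w) ^ (S n)).
    { intros t. reflexivity. }
    eapply is_derive_eq. apply CR_deriv_mult. apply CR_deriv_lin. apply IHn.
    change (@eq C (w * (RtoC x * w) ^ S n + RtoC x * w * (RtoC (INR (S n)) * w * (RtoC x * w) ^ n))
       (RtoC (INR (S (S n))) * w * (RtoC x * w) ^ S n)).
    rewrite (S_INR (S n)), RtoC_plus. simpl Cpow. ring.
Qed.

Definition tk (w : C) (k : nat) (t : R) : C := (RtoC t * w) ^ k / cfact k.
Definition Pn (w : C) (n : nat) (t : R) : C := sum_n (fun k => tk w k t) n.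

Lemma CR_deriv_tk (w : C) n x :
  is_derive (V:=CR) (tk w (S n)) x (w * tk w n x).
Proof.
  unfold tk.
  eapply is_derive_ext with (f := fun t => / cfact (S n) * (RtoC t * w) ^ (S n)).
  { intros t. unfold Cdiv. cring. }
  eapply is_derive_eq. apply CR_deriv_cmul. apply CR_deriv_pow.
  change (@eq C (/ cfact (S n) * (RtoC (INR (S n)) * w * (RtoC x * w) ^ n)) (w * ((RtoC x * w) ^ n / cfact n))).
  rewrite cfact_S. field. split. apply cfact_nz.
  intros H. apply RtoC_inj in H. apply (not_0_INR (S n)). auto. exact H.
Qed.

Lemma CR_deriv_Pn (w : C) n x :
  is_derive (V:=CR) (Pn w n) x (w * (Pn w n x - tk w n x)).
Proof.
  induction n.
  - eapply is_derive_ext with (f := fun _ : R => RtoC 1).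
    { intros t. unfold Pn, tk. rewrite sum_O. simpl. unfold cfact. simpl. cfield. }
    eapply is_derive_eq. apply CR_deriv_const.
    unfold Pn. rewrite sum_O. change (@eq C 0 (w * (tk w 0 x - tk w 0 x))). ring.
  - eapply is_derive_ext with (f := fun t => Pn w n t + tk w (S n) t).
    { intros t. unfold Pn. rewrite sum_Sn. reflexivity. }
    eapply is_derive_eq. apply CR_deriv_plus. apply IHn. apply CR_deriv_tk.
    unfold Pn. rewrite sum_Sn. change (@eq C (w * (sum_n (fun k => tk w k x) n - tk w n x) + w * tk w n x)
      (w * (sum_n (fun k => tk w k x) n + tk w (S n) x - tk w (S n) x))). ring.
Qed.


Lemma cexp_add a b : cexp (a + b) = cexp a * cexp b.
Proof.
  destruct a as [a1 a2], b as [b1 b2]. unfold cexp. simpl.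
  rewrite exp_plus, cos_plus, sin_plus.
  apply injective_projections; simpl; ring.
Qed.

Lemma cexp_0 : cexp 0 = 1.
Proof.
  unfold cexp. simpl. rewrite exp_0, cos_0, sin_0.
  apply injective_projections; simpl; ring.
Qed.

Lemma Pn_0 w n : Pn w n 0 = 1.
Proof.
  induction n.
  - unfold Pn, tk. rewrite sum_O. unfold cfact. simpl. field.
  - unfold Pn in *. rewrite sum_Sn, IHn. unfold tk.
    replace (RtoC 0 * w) with (RtoC 0) by ring. simpl Cpow. 
    change (@eq C (1 + 0 * 0 ^ n / cfact (S n)) 1). field. apply cfact_nz.
Qed.

Lemma ex_derive_tk w n x : ex_derive (V:=CR) (tk w n) x.
Proof.
  destruct n.
  - exists (RtoC 0). eapply is_derive_ext with (f := fun _ : R => RtoC 1).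
    { intros t. unfold tk. unfold cfact. simpl. cfield. }
    apply CR_deriv_const.
  - eexists. apply CR_deriv_tk.
Qed.

Definition integrand (w : C) (n : nat) (s : R) : C :=
  cexp w * (w * (cexp (RtoC s * (- w)) * tk w n s)).

Lemma FTC_rem (w : C) (n : nat) :
  is_RInt (V:=CR) (integrand w n) 0 1 (Rrem n w).
Proof.
  set (F := fun s : R => - (cexp w * (cexp (RtoC s * (- w)) * Pn w n s))).
  assert (HF : forall s, is_derive (V:=CR) F s (integrand w n s)).
  { intros s. unfold F, integrand.
    eapply is_derive_eq. apply CR_deriv_opp. apply CR_deriv_cmul. apply CR_deriv_mult.
    apply CR_deriv_cexp. apply CR_deriv_Pn.
    cring. }
  assert (Hc : forall s, continuous (integrand w n) s).
  { intros s. apply (ex_derive_continuous (K:=R_AbsRing) (V:=CR)). unfold integrand.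
    destruct (ex_derive_tk w n s) as [d Hd].
    eexists. apply CR_deriv_cmul. apply CR_deriv_cmul. apply CR_deriv_mult.
    apply CR_deriv_cexp. apply Hd. }
  pose proof (is_RInt_derive (V:=C_R_CompleteNormedModule) F (integrand w n) 0 1 (fun s _ => HF s) (fun s _ => Hc s)) as H.
  enough (E : minus (F 1) (F 0) = Rrem n w) by (rewrite <- E; exact H).
  unfold F. rewrite Pn_0.
  change (@eq C (- (cexp w * (cexp (RtoC 1 * - w) * Pn w n 1)) - - (cexp w * (cexp (RtoC 0 * - w) * 1))) (Rrem n w)).
  replace (RtoC 0 * - w) with (RtoC 0) by ring. replace (RtoC 1 * - w) with (- w) by ring.
  rewrite cexp_0. 
  assert (E1 : cexp w * cexp (- w) = 1). { rewrite <- cexp_add. replace (w + - w) with (RtoC 0) by ring. apply cexp_0. }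
  unfold Rrem, Pn, tk.
  assert (E2 : sum_n (fun k => (RtoC 1 * w) ^ k / cfact k) n = sum_n (fun k => w ^ k / cfact k) n).
  { apply sum_n_ext. intros k. f_equal. f_equal. ring. }
  rewrite E2.
  transitivity (cexp w - (cexp w * cexp (- w)) * sum_n (fun k : nat => w ^ k / cfact k) n). ring.
  rewrite E1. ring.
Qed.



Lemma norm_CR (x : C) : @norm R_AbsRing C_R_NormedModule x = Cmod x.
Proof.
  destruct x as [a b]. unfold norm. simpl. unfold prod_norm, Cmod. simpl.
  f_equal. change (norm a) with (Rabs a). change (norm b) with (Rabs b).
  rewrite !Rmult_1_r, <- !Rabs_mult, !(Rabs_pos_eq (_ * _)) by nra. reflexivity.
Qed.

Lemma Cmod_cexp z : Cmod (cexp z) = exp (Re z).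
Proof.
  destruct z as [a b]. unfold cexp, Cmod. cbn [fst snd Re Im].
  assert (E: ((exp a * cos b) ^ 2 + (exp a * sin b) ^ 2)%R = (exp a ^ 2)%R).
  { rewrite <- (Rmult_1_r (exp a ^ 2)), <- (sin2_cos2 b). unfold Rsqr. ring. }
  rewrite E. apply sqrt_pow2. left; apply exp_pos.
Qed.

Lemma Re_le_Cmod z : (Re z <= Cmod z)%R.
Proof. pose proof (re_le_Cmod z). pose proof (Rle_abs (Re z)). lra. Qed.

Lemma exp_le' a b : (a <= b)%R -> (exp a <= exp b)%R.
Proof. intros [H|H]. left; apply exp_increasing; auto. subst; lra. Qed.

Lemma Cmod_cexp_le z : (Cmod (cexp z) <= exp (Cmod z))%R.
Proof. rewrite Cmod_cexp. apply exp_le'. apply Re_le_Cmod. Qed.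

Lemma Cmod_RtoC r : Cmod (RtoC r) = Rabs r.
Proof. apply Cmod_R. Qed.

Lemma Cmod_cfact n : Cmod (cfact n) = INR (Factorial.fact n).
Proof. unfold cfact. rewrite Cmod_R. apply Rabs_pos_eq. apply pos_INR. Qed.

Lemma tk_bound w n s : (0 <= s <= 1)%R -> (Cmod (tk w n s) <= Cmod w ^ n / INR (Factorial.fact n))%R.
Proof.
  intros Hs. unfold tk. rewrite Cmod_div by apply cfact_nz. rewrite Cmod_cfact, Cmod_pow, Cmod_mult, Cmod_R.
  apply Rmult_le_compat_r. left; apply Rinv_0_lt_compat, INR_fact_lt_0.
  apply pow_incr. split. apply Rmult_le_pos; [apply Rabs_pos|apply Cmod_ge_0].
  rewrite Rabs_pos_eq by lra. pose proof (Cmod_ge_0 w). nra.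
Qed.

Lemma integrand_bound w n s : (0 <= s <= 1)%R ->
  (Cmod (integrand w n s) <= exp (Cmod w) * (Cmod w * (exp (Cmod w) * (Cmod w ^ n / INR (Factorial.fact n)))))%R.
Proof.
  intros Hs. unfold integrand. rewrite !Cmod_mult.
  pose proof (Cmod_ge_0 w).
  apply Rmult_le_compat; try apply Rmult_le_pos; try apply Cmod_ge_0; try apply Cmod_cexp_le.
  try apply Rmult_le_pos; try apply Cmod_ge_0.
  apply Rmult_le_compat_l. apply Cmod_ge_0.
  apply Rmult_le_compat; try apply Cmod_ge_0; [| apply tk_bound; auto].
  rewrite Cmod_cexp. apply exp_le'. simpl. pose proof (re_le_Cmod w). pose proof (Rle_abs (- fst w)).
  rewrite Rabs_Ropp in H1. unfold Re in H0. nra.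
Qed.

Lemma is_RInt_const01 (M : R) : is_RInt (V:=R_NormedModule) (fun _ => M) 0 1 M.
Proof.
  pose proof (is_RInt_const (V:=R_NormedModule) 0 1 M) as H.
  unfold scal in H; simpl in H; unfold mult in H; simpl in H.
  replace ((1-0)*M)%R with M in H by ring. exact H.
Qed.

Lemma Rrem_bound w n :
  (Cmod (Rrem n w) <= exp (Cmod w) * (Cmod w * (exp (Cmod w) * (Cmod w ^ n / INR (Factorial.fact n)))))%R.
Proof.
  rewrite <- norm_CR.
  eapply (norm_RInt_le (V:=CR) (integrand w n) (fun _ => exp (Cmod w) * (Cmod w * (exp (Cmod w) * (Cmod w ^ n / INR (Factorial.fact n)))))%R 0 1).
  lra. intros s Hs. rewrite norm_CR. apply integrand_bound; auto.
  apply FTC_rem.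
  apply is_RInt_const01.
Qed.


Lemma sum_n_NM (a : nat -> C) n : @sum_n (NormedModule.AbelianMonoid C_AbsRing C_NormedModule) a n = @sum_n C_AbelianMonoid a n.
Proof. reflexivity. Qed.
Lemma Copp_minus' (a b : C) : - (a - b) = b - a.
Proof. ring. Qed.
Ltac set_printing := match goal with |- ?g => let t := constr:(g) in idtac t end.
Lemma exp_series_R r : is_series (fun n => r ^ n / INR (Factorial.fact n))%R (exp r).
Proof.
  pose proof (is_exp_Reals r) as H. unfold is_pseries in H.
  eapply is_series_ext. 2: exact H. intros n. simpl. rewrite pow_n_pow. unfold scal; simpl. unfold mult; simpl. reflexivity.
Qed.

Lemma lim_pow_fact r : is_lim_seq (fun n => r ^ n / INR (Factorial.fact n))%R 0.
Proof. apply ex_series_lim_0. eexists. apply exp_series_R. Qed.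

Lemma C_lim_intro (u : nat -> C) l :
  is_lim_seq (fun n => Cmod (u n - l)) 0 -> filterlim u eventually (locally l).
Proof.
  intros H. apply (filterlim_locally_ball_norm (K:=C_AbsRing) (U:=C_NormedModule)).
  intros eps. apply is_lim_seq_spec in H. destruct (H eps) as [N HN].
  exists N. intros n Hn. specialize (HN n Hn). unfold ball_norm.
  change (Cmod (u n - l) < eps)%R. rewrite Rminus_0_r, Rabs_pos_eq in HN by apply Cmod_ge_0. exact HN.
Qed.

Lemma C_lim_elim (u : nat -> C) l :
  filterlim u eventually (locally l) -> is_lim_seq (fun n => Cmod (u n - l)) 0.
Proof.
  intros H0. pose proof (proj1 (filterlim_locally_ball_norm (K:=C_AbsRing) (U:=C_NormedModule) u l) H0) as H.
  apply is_lim_seq_spec. intros eps. destruct (H eps) as [N HN].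
  exists N. intros n Hn. specialize (HN n Hn). unfold ball_norm in HN.
  change (Cmod (u n - l) < eps)%R in HN. rewrite Rminus_0_r, Rabs_pos_eq by apply Cmod_ge_0. exact HN.
Qed.

Lemma cexp_series w : is_series (fun k => w ^ k / cfact k) (cexp w).
Proof.
  unfold is_series. apply C_lim_intro.
  set (K := (exp (Cmod w) * (Cmod w * exp (Cmod w)))%R).
  apply is_lim_seq_le_le with (u := fun _ => 0%R) (w := fun n => (K * (Cmod w ^ n / INR (Factorial.fact n)))%R).
  - intros n. split. apply Cmod_ge_0.
    match goal with |- (Cmod ?z <= _)%R => replace z with (- Rrem n w) by (unfold Rrem; rewrite Copp_minus'; reflexivity) end.
    rewrite Cmod_opp. eapply Rle_trans. apply Rrem_bound. unfold K. right; ring.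
  - apply is_lim_seq_const.
  - replace (Finite 0) with (Rbar_mult K 0) by (simpl; f_equal; ring).
    apply is_lim_seq_scal_l. apply lim_pow_fact.
Qed.

Lemma sum_norm_le (a : nat -> C) (b : nat -> R) N :
  (forall n, (Cmod (a n) <= b n)%R) -> (Cmod (sum_n a N) <= sum_n b N)%R.
Proof.
  intros H. induction N.
  - rewrite !sum_O. apply H.
  - rewrite !sum_Sn. eapply Rle_trans. apply Cmod_triangle.
    change (plus (sum_n b N) (b (S N))) with (sum_n b N + b (S N))%R.
    apply Rplus_le_compat; auto.
Qed.

Lemma series_norm_le (a : nat -> C) (b : nat -> R) L B :
  is_series a L -> is_series b B -> (forall n, (Cmod (a n) <= b n)%R) -> (Cmod L <= B)%R.
Proof.
  intros Ha Hb H.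
  assert (H1 : filterlim (fun n => norm (K:=C_AbsRing) (V:=C_NormedModule) (sum_n a n)) eventually
     (locally (norm (K:=C_AbsRing) (V:=C_NormedModule) L))).
  { eapply filterlim_comp. apply Ha. apply filterlim_norm. }
  change (Rbar_le (Cmod L) B).
  apply (is_lim_seq_le (fun n => norm (K:=C_AbsRing) (V:=C_NormedModule) (sum_n a n)) (sum_n b) (Cmod L) B); auto.
  intros n. change (Cmod (sum_n a n) <= sum_n b n)%R. apply sum_norm_le. auto.
Qed.

Lemma series_tail_le (a : nat -> C) (b : nat -> R) L B N :
  is_series a L -> is_series b B -> (forall n, (Cmod (a n) <= b n)%R) ->
  (Cmod (L - sum_n a N) <= B - sum_n b N)%R.
Proof.
  intros Ha Hb H.
  apply (series_norm_le (fun k => a (S N + k)%nat) (fun k => b (S N + k)%nat)); auto.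
  - apply is_series_incr_n. lia. simpl. refine (eq_ind L (fun z => is_series a z) Ha _ _).
    assert (E : forall L s : C, L = L - s + s) by (intros; ring). apply E.
  - apply is_series_incr_n. lia. simpl. refine (eq_ind B (fun z => is_series b z) Hb _ _).
    assert (E : forall L s : R, L = (L - s + s)%R) by (intros; ring). apply E.
Qed.


Definition cl (s : R) : R := Rmax 0 (Rmin 1 s).

Lemma cl_in s : (0 <= cl s <= 1)%R.
Proof. unfold cl, Rmax, Rmin. repeat destruct Rle_dec; lra. Qed.

Lemma cl_id s : (0 <= s <= 1)%R -> cl s = s.
Proof. intros. unfold cl, Rmax, Rmin. repeat destruct Rle_dec; lra. Qed.

Lemma is_RInt_sum (f : nat -> R -> C) (c : nat -> C) N :
  (forall n, is_RInt (V:=CR) (f n) 0 1 (c n)) ->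
  is_RInt (V:=CR) (fun s => sum_n (fun n => f n s) N) 0 1 (sum_n c N).
Proof.
  intros H. induction N.
  - eapply is_RInt_ext. 2: { rewrite sum_O. apply H. } intros; rewrite sum_O; reflexivity.
  - rewrite sum_Sn. eapply is_RInt_ext. 2: { apply (is_RInt_plus (V:=CR)). apply IHN. apply H. }
    intros; rewrite sum_Sn; reflexivity.
Qed.

Lemma tbt (f : nat -> R -> C) (F : R -> C) (c : nat -> C) (g : nat -> R) G :
  is_series g G ->
  (forall n s, (0 <= s <= 1)%R -> (Cmod (f n s) <= g n)%R) ->
  (forall n, is_RInt (V:=CR) (f n) 0 1 (c n)) ->
  (forall s, (0 <= s <= 1)%R -> is_series (fun n => f n s) (F s)) ->
  exists I, is_series c I /\ is_RInt (V:=CR) F 0 1 I.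
Proof.
  intros Hg Hb Hi Hs.
  set (fN := fun (N : nat) (s : R) => sum_n (fun n => f n (cl s)) N).
  set (G' := fun s => F (cl s)).
  assert (HI : forall N, is_RInt (V:=C_R_CompleteNormedModule) (fN N) 0 1 (sum_n c N)).
  { intros N. eapply is_RInt_ext. 2: apply (is_RInt_sum f c N Hi).
    intros x Hx. unfold fN. rewrite cl_id. reflexivity. rewrite Rmin_left, Rmax_right in Hx; lra. }
  assert (HU : filterlim fN eventually (locally (T:=fct_UniformSpace R C_R_CompleteNormedModule) G')).
  { apply (proj2 (@filterlim_locally nat (fct_UniformSpace R C_R_CompleteNormedModule) eventually _ fN G')). intros eps.
    pose proof (proj1 (filterlim_locally_ball_norm (K:=R_AbsRing) (U:=R_NormedModule) (sum_n g) G) Hg) as Hg'.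
    destruct (Hg' eps) as [N0 HN0]. exists N0. intros N HN t.
    apply C_NormedModule_mixin_compat1.
    specialize (HN0 N HN). unfold ball_norm in HN0.
    assert (E : Cmod (minus (fN N t) (G' t)) = Cmod (G' t - sum_n (fun n => f n (cl t)) N)).
    { rewrite <- Cmod_opp. f_equal. exact (Copp_minus' _ _). }
    rewrite E. 
    assert (T := series_tail_le (fun n => f n (cl t)) g (G' t) G N (Hs _ (cl_in t)) Hg (fun n => Hb n _ (cl_in t))).
    eapply Rle_lt_trans. apply T.
    eapply Rle_lt_trans. 2: apply HN0.
    change (G - sum_n g N <= Rabs (sum_n g N - G))%R. rewrite <- Rabs_Ropp.
    eapply Rle_trans; [|apply Rle_abs]. right; ring. }
  destruct (filterlim_RInt (U:=nat) (V:=C_R_CompleteNormedModule) fN 0 1 eventually eventually_filter G' (sum_n c) HI HU) as [I [H1 H2]].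
  exists I. split. exact H1.
  eapply is_RInt_ext. 2: exact H2. intros x Hx. unfold G'. rewrite cl_id. reflexivity. rewrite Rmin_left, Rmax_right in Hx; lra.
Qed.


Lemma series_comp (a : nat -> C) L (p : C -> R) :
  (forall u v : C, p (u + v) = (p u + p v)%R) ->
  (forall u : C, (Rabs (p u) <= Cmod u)%R) ->
  is_series a L -> is_series (fun n => p (a n)) (p L).
Proof.
  intros Hadd Hle H.
  assert (Hp0 : forall u v : C, p (u - v) = (p u - p v)%R).
  { intros u v. pose proof (Hadd (u - v) v) as E. replace (u - v + v) with u in E by ring. lra. }
  assert (Hs : forall N, sum_n (fun n => p (a n)) N = p (sum_n a N)).
  { induction N. rewrite !sum_O. reflexivity. rewrite !sum_Sn, IHN. symmetry. apply Hadd. }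
  pose proof (proj1 (filterlim_locally_ball_norm (K:=C_AbsRing) (U:=C_NormedModule) (sum_n a) L) H) as H'.
  apply (proj2 (filterlim_locally_ball_norm (K:=R_AbsRing) (U:=R_NormedModule) _ _)).
  intros eps. destruct (H' eps) as [N HN]. exists N. intros n Hn. specialize (HN n Hn).
  unfold ball_norm in *. change (Rabs (sum_n (fun n => p (a n)) n - p L) < eps)%R.
  change (Cmod (sum_n a n - L) < eps)%R in HN.
  rewrite Hs, <- Hp0. eapply Rle_lt_trans. apply Hle. exact HN.
Qed.

Lemma series_Re (a : nat -> C) L : is_series a L -> is_series (fun n => Re (a n)) (Re L).
Proof.
  apply series_comp. intros; reflexivity. apply re_le_Cmod.
Qed.

Lemma series_Im (a : nat -> C) L : is_series a L -> is_series (fun n => Im (a n)) (Im L).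
Proof.
  apply series_comp. intros; reflexivity. intros u. eapply Rle_trans. 2: apply Rmax_Cmod. apply Rmax_r.
Qed.

Lemma CSeries_correct (a : nat -> C) L : is_series a L -> CSeries a = L.
Proof.
  intros H. unfold CSeries. rewrite (is_series_unique _ _ (series_Re a L H)), (is_series_unique _ _ (series_Im a L H)).
  destruct L; reflexivity.
Qed.

Lemma INR_fact_ge_1 n : (1 <= INR (Factorial.fact n))%R.
Proof. apply (le_INR 1). pose proof (Factorial.lt_O_fact n). lia. Qed.

Lemma I0_series z : is_series (fun n => z ^ n / (cfact n * cfact n)) (I0sqrt z).
Proof.
  assert (Hex : ex_series (K:=C_AbsRing) (V:=C_CompleteNormedModule) (fun n => z ^ n / (cfact n * cfact n))).
  { apply (ex_series_le (V:=C_CompleteNormedModule) _ (fun n => Cmod z ^ n / INR (Factorial.fact n))%R).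
    - intros n. change (Cmod (z ^ n / (cfact n * cfact n)) <= Cmod z ^ n / INR (Factorial.fact n))%R.
      rewrite Cmod_div, Cmod_mult, Cmod_cfact, Cmod_pow.
      2: { unfold cfact; rewrite <- RtoC_mult; intros E; apply RtoC_inj in E; pose proof (INR_fact_lt_0 n); nra. }
      pose proof (INR_fact_ge_1 n). pose proof (pow_le (Cmod z) n (Cmod_ge_0 z)).
      unfold Rdiv. apply Rmult_le_compat_l. auto.
      set (b := INR (Factorial.fact n)) in *.
      assert (Hb: (0 < / b <= 1)%R) by (split; [apply Rinv_0_lt_compat; lra| rewrite <- Rinv_1; apply Rinv_le_contravar; lra]).
      rewrite Rinv_mult. nra.
    - eexists. apply exp_series_R. }
  destruct Hex as [L HL]. unfold I0sqrt. rewrite (CSeries_correct _ L HL). exact HL.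
Qed.


Lemma row_sum {G : AbelianMonoid} (d : nat -> nat -> G) M :
  sum_n (fun N => sum_n (fun k => d k (N - k)%nat) N) M = sum_n (fun k => sum_n (d k) (M - k)%nat) M.
Proof.
  induction M.
  - rewrite !sum_O. reflexivity.
  - rewrite sum_Sn, IHM. rewrite (sum_Sn (fun k => sum_n (d k) (S M - k)%nat)).
    rewrite (sum_n_ext_loc (fun k => sum_n (d k) (S M - k)%nat) (fun k => plus (sum_n (d k) (M - k)%nat) (d k (S M - k)%nat))).
    2: { intros k Hk. replace (S M - k)%nat with (S (M - k)) by lia. apply sum_Sn. }
    rewrite sum_n_plus, sum_Sn. replace (S M - S M)%nat with 0%nat by lia. rewrite sum_O.
    apply plus_assoc.
Qed.

Lemma sum_n_minusC (u w : nat -> C) M :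
  sum_n (G:=C_AbelianMonoid) (fun k => u k - w k) M = sum_n (G:=C_AbelianMonoid) u M - sum_n (G:=C_AbelianMonoid) w M.
Proof.
  induction M. rewrite !sum_O. reflexivity.
  rewrite !sum_Sn, IHM. change (@eq C (u 0%nat - w 0%nat) (u 0%nat - w 0%nat)) || idtac.
  change (@eq C (sum_n u M - sum_n w M + (u (S M) - w (S M))) (sum_n u M + u (S M) - (sum_n w M + w (S M)))). ring.
Qed.

Lemma sum_n_minusR (u w : nat -> R) M :
  sum_n (G:=R_AbelianMonoid) (fun k => u k - w k)%R M = (sum_n (G:=R_AbelianMonoid) u M - sum_n (G:=R_AbelianMonoid) w M)%R.
Proof.
  induction M. rewrite !sum_O. reflexivity.
  rewrite !sum_Sn, IHM. change (sum_n u M - sum_n w M + (u (S M) - w (S M)) = sum_n u M + u (S M) - (sum_n w M + w (S M)))%R. ring.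
Qed.

Lemma sum_n_multR (c : R) (u : nat -> R) M :
  sum_n (G:=R_AbelianMonoid) (fun k => c * u k)%R M = (c * sum_n (G:=R_AbelianMonoid) u M)%R.
Proof.
  induction M. rewrite !sum_O. reflexivity.
  rewrite !sum_Sn, IHM. change (c * sum_n u M + c * u (S M) = c * (sum_n u M + u (S M)))%R. ring.
Qed.

Lemma sum_n_leR (u w : nat -> R) M : (forall k, (u k <= w k)%R) ->
  (sum_n (G:=R_AbelianMonoid) u M <= sum_n (G:=R_AbelianMonoid) w M)%R.
Proof.
  intros H. induction M. rewrite !sum_O. auto.
  rewrite !sum_Sn. change (sum_n u M + u (S M) <= sum_n w M + w (S M))%R. apply Rplus_le_compat; auto.
Qed.

Lemma diag_series (d : nat -> nat -> C) (r : nat -> C) v (a b : nat -> R) A B :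
  (forall k, (0 <= a k)%R) -> (forall m, (0 <= b m)%R) -> is_series a A -> is_series b B ->
  (forall k m, (Cmod (d k m) <= a k * b m)%R) ->
  (forall k, is_series (d k) (r k)) -> is_series r v ->
  is_series (fun N => sum_n (fun k => d k (N - k)%nat) N) v.
Proof.
  intros Ha0 Hb0 HA HB Hd Hr Hv.
  unfold is_series. apply C_lim_intro.
  eapply is_lim_seq_ext with (u := fun M => Cmod (sum_n (G:=C_AbelianMonoid) (fun N => sum_n (G:=C_AbelianMonoid) (fun k => d k (N - k)%nat) N) M - v)).
  { intros; reflexivity. }
  set (E := fun M => (B * sum_n (G:=R_AbelianMonoid) a M - sum_n (G:=R_AbelianMonoid) (fun N => sum_n (G:=R_AbelianMonoid) (fun k => (a k * b (N - k)%nat)%R) N) M)%R).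
  apply is_lim_seq_le_le with (u := fun _ => 0%R) (w := fun M => (Cmod (sum_n (G:=C_AbelianMonoid) r M - v) + E M)%R).
  - intros M. split. apply Cmod_ge_0.
    rewrite (row_sum d M).
    assert (Hrow2 := row_sum (G:=R_AbelianMonoid) (fun k m => (a k * b m)%R) M). cbv beta in Hrow2.
    assert (Eq1 : sum_n (G:=C_AbelianMonoid) (fun k => sum_n (d k) (M - k)%nat) M - v
        = (sum_n (G:=C_AbelianMonoid) r M - v) - sum_n (G:=C_AbelianMonoid) (fun k => r k - sum_n (d k) (M - k)%nat) M).
    { rewrite sum_n_minusC. ring. }
    rewrite Eq1. eapply Rle_trans. unfold Cminus. apply Cmod_triangle. rewrite Cmod_opp.
    apply Rplus_le_compat_l. unfold E. rewrite Hrow2.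
    eapply Rle_trans. apply sum_norm_le. intros k.
    apply (series_tail_le (d k) (fun m => (a k * b m)%R) (r k) (a k * B)%R (M - k)%nat (Hr k)).
    { apply (is_series_scal_l (K:=R_AbsRing) (V:=R_NormedModule) (a k) b B HB). }
    { intros m. apply Hd. }
    right. rewrite sum_n_minusR. f_equal.
    rewrite (sum_n_ext (fun k => (a k * B)%R) (fun k => (B * a k)%R)) by (intros; apply Rmult_comm). apply sum_n_multR.
  - apply is_lim_seq_const.
  - replace (Finite 0) with (Rbar_plus 0 (B * A - A * B)%R) by (simpl; f_equal; ring).
    apply is_lim_seq_plus'.
    + apply C_lim_elim. exact Hv.
    + unfold E. apply is_lim_seq_minus'.
      * replace (Finite (B * A)) with (Rbar_mult B A) by reflexivity. apply is_lim_seq_scal_l. exact HA.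
      * assert (Habs : forall u : nat -> R, (forall n, 0 <= u n)%R -> is_series u (Series u) -> ex_series (fun n => Rabs (u n))).
        { intros u Hu Hs. eexists. eapply is_series_ext. 2: exact Hs. intros n. rewrite Rabs_pos_eq; auto. }
        pose proof (is_series_mult a b A B HA HB (Habs a Ha0 ltac:(rewrite (is_series_unique _ _ HA); exact HA))
           (Habs b Hb0 ltac:(rewrite (is_series_unique _ _ HB); exact HB))) as HM.
        unfold is_series in HM.
        apply is_lim_seq_ext with (u := sum_n (fun n => sum_f_R0 (fun k => (a k * b (n - k)%nat)%R) n)).
        { intros n. apply sum_n_ext. intros m. rewrite sum_n_Reals. reflexivity. }
        exact HM.
Qed.


Lemma is_RInt_cmul (c : C) (f : R -> C) a b l :
  is_RInt (V:=CR) f a b l -> is_RInt (V:=CR) (fun s => c * f s) a b (c * l).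
Proof.
  intros H.
  pose proof (is_RInt_fct_extend_fst (U:=R_NormedModule) (V:=R_NormedModule) f a b l H) as H1.
  pose proof (is_RInt_fct_extend_snd (U:=R_NormedModule) (V:=R_NormedModule) f a b l H) as H2.
  destruct c as [c1 c2].
  replace ((c1, c2) * l) with ((c1 * fst l - c2 * snd l)%R, (c1 * snd l + c2 * fst l)%R)
    by (destruct l; reflexivity).
  apply (is_RInt_fct_extend_pair (U:=R_NormedModule) (V:=R_NormedModule)).
  - apply (is_RInt_ext (fun s => minus (scal c1 (fst (f s))) (scal c2 (snd (f s))))).
    { intros s _. destruct (f s); reflexivity. }
    apply (is_RInt_minus (V:=R_NormedModule)); apply (is_RInt_scal (V:=R_NormedModule)); assumption.
  - apply (is_RInt_ext (fun s => plus (scal c1 (snd (f s))) (scal c2 (fst (f s))))).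
    { intros s _. destruct (f s); reflexivity. }
    apply (is_RInt_plus (V:=R_NormedModule)); apply (is_RInt_scal (V:=R_NormedModule)); assumption.
Qed.

Lemma is_RInt_RtoC (h : R -> R) a b l :
  is_RInt (V:=R_NormedModule) h a b l -> is_RInt (V:=CR) (fun s => RtoC (h s)) a b (RtoC l).
Proof.
  intros H. apply (is_RInt_fct_extend_pair (U:=R_NormedModule) (V:=R_NormedModule)).
  - exact H.
  - pose proof (is_RInt_const (V:=R_NormedModule) a b 0%R) as H0.
    unfold scal in H0; simpl in H0; unfold mult in H0; simpl in H0. rewrite Rmult_0_r in H0. exact H0.
Qed.

Lemma is_RInt_pow01 j : is_RInt (V:=R_NormedModule) (fun s => s ^ j)%R 0 1 (/ INR (S j))%R.
Proof.
  assert (HS : INR (S j) <> 0%R) by (apply not_0_INR; lia).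
  set (F := fun s => (s ^ (S j) / INR (S j))%R).
  assert (HF : forall s, is_derive F s (s ^ j)%R).
  { intros s. unfold F. eapply is_derive_eq.
    eapply (is_derive_scal_l (K:=R_AbsRing) (V:=R_NormedModule) (fun s => s ^ S j)%R s).
    apply is_derive_pow. apply (is_derive_id (K:=R_AbsRing)).
    simpl Init.Nat.pred. unfold scal; simpl; unfold mult; simpl. unfold one; simpl. field. auto. }
  pose proof (is_RInt_derive (V:=R_CompleteNormedModule) F (fun s => s ^ j)%R 0 1 (fun s _ => HF s)) as H.
  replace (/ INR (S j))%R with (minus (F 1) (F 0)). apply H.
  - intros s _. apply (ex_derive_continuous (K:=R_AbsRing) (V:=R_NormedModule)). eexists.
    apply is_derive_pow. apply (is_derive_id (K:=R_AbsRing)).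
  - unfold F, minus, plus, opp. change (1 ^ S j / INR (S j) + - (0 ^ S j / INR (S j)) = / INR (S j))%R. rewrite pow1, pow_i by lia. field. auto.
Qed.

Lemma sum_n_cmul (c : C) (u : nat -> C) M :
  sum_n (G:=C_AbelianMonoid) (fun k => c * u k) M = c * sum_n (G:=C_AbelianMonoid) u M.
Proof.
  induction M. rewrite !sum_O. reflexivity.
  rewrite !sum_Sn, IHM. change (@eq C (c * sum_n u M + c * u (S M)) (c * (sum_n u M + u (S M)))). ring.
Qed.


Definition fI (x y : C) (n : nat) (s : R) : C :=
  y * (cexp (- (RtoC s * y)) * ((x * (RtoC s * y)) ^ n / (cfact n * cfact n))).
Definition cI (x y : C) (n : nat) : C := x ^ n / cfact n * cexp (- y) * Rrem n y.

Lemma cexp_inv w : cexp (- w) * cexp w = 1.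
Proof. rewrite <- cexp_add. replace (- w + w) with (RtoC 0) by ring. apply cexp_0. Qed.

Lemma fI_eq x y n s : fI x y n s = (x ^ n / cfact n * cexp (- y)) * integrand y n s.
Proof.
  unfold fI, integrand, tk.
  replace (RtoC s * - y) with (- (RtoC s * y)) by ring.
  rewrite (Cpow_mult_l x).
  pose proof (cexp_inv y) as H.
  transitivity ((cexp (- y) * cexp y) * (y * (cexp (- (RtoC s * y)) * (x ^ n * (RtoC s * y) ^ n / (cfact n * cfact n))))).
  rewrite H; ring. field. apply cfact_nz.
Qed.

Lemma cI_int x y n : is_RInt (V:=CR) (fI x y n) 0 1 (cI x y n).
Proof.
  apply (is_RInt_ext (fun s => (x ^ n / cfact n * cexp (- y)) * integrand y n s)).
  { intros s _. symmetry. apply fI_eq. }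
  unfold cI. apply is_RInt_cmul. apply FTC_rem.
Qed.

Lemma Cmod_div_fact z n : (Cmod (z / cfact n) <= Cmod z)%R.
Proof.
  rewrite Cmod_div by apply cfact_nz. rewrite Cmod_cfact.
  pose proof (INR_fact_ge_1 n). pose proof (Cmod_ge_0 z).
  unfold Rdiv. assert (0 < / INR (Factorial.fact n) <= 1)%R.
  { split. apply Rinv_0_lt_compat; lra. rewrite <- Rinv_1. apply Rinv_le_contravar; lra. }
  nra.
Qed.

Lemma Cmod_cexp_s s y : (0 <= s <= 1)%R -> (Cmod (cexp (- (RtoC s * y))) <= exp (Cmod y))%R.
Proof.
  intros Hs. eapply Rle_trans. apply Cmod_cexp_le. apply exp_le'.
  rewrite Cmod_opp, Cmod_mult, Cmod_R, Rabs_pos_eq by lra. pose proof (Cmod_ge_0 y). nra.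
Qed.

Lemma fI_bound x y n s : (0 <= s <= 1)%R ->
  (Cmod (fI x y n s) <= Cmod y * exp (Cmod y) * (Cmod (x * y) ^ n / INR (Factorial.fact n)))%R.
Proof.
  intros Hs. unfold fI.
  replace (x * (RtoC s * y)) with (RtoC s * (x * y)) by ring.
  replace ((RtoC s * (x * y)) ^ n / (cfact n * cfact n)) with (tk (x * y) n s / cfact n)
    by (unfold tk; field; apply cfact_nz).
  rewrite Cmod_mult, Cmod_mult. rewrite Rmult_assoc. apply Rmult_le_compat_l. apply Cmod_ge_0.
  apply Rmult_le_compat. apply Cmod_ge_0. apply Cmod_ge_0. apply Cmod_cexp_s; auto.
  eapply Rle_trans. apply Cmod_div_fact. apply tk_bound; auto.
Qed.

Definition fL (x y : C) (k m : nat) (s : R) : C :=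
  y * ((- (RtoC s * y)) ^ m / cfact m * ((x * (RtoC s * y)) ^ k / (cfact k * cfact k))).
Definition DL (x y : C) (k m : nat) : C :=
  y * ((- y) ^ m / cfact m * ((x * y) ^ k / (cfact k * cfact k))).
Definition dL (x y : C) (k m : nat) : C := DL x y k m * RtoC (/ INR (S (m + k))).

Lemma fL_eq x y k m s : fL x y k m s = RtoC (s ^ (m + k)) * DL x y k m.
Proof.
  unfold fL, DL. rewrite RtoC_pow, Cpow_add_r.
  replace (- (RtoC s * y)) with (RtoC s * - y) by ring.
  replace (x * (RtoC s * y)) with (RtoC s * (x * y)) by ring.
  rewrite !Cpow_mult_l. field. split; apply cfact_nz.
Qed.

Lemma dL_int x y k m : is_RInt (V:=CR) (fL x y k m) 0 1 (dL x y k m).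
Proof.
  apply (is_RInt_ext (fun s => DL x y k m * RtoC (s ^ (m + k)))).
  { intros s _. rewrite fL_eq. apply Cmult_comm. }
  unfold dL. apply is_RInt_cmul. apply is_RInt_RtoC. apply is_RInt_pow01.
Qed.

Lemma fL_bound x y k m s : (0 <= s <= 1)%R ->
  (Cmod (fL x y k m s) <= (Cmod y * (Cmod (x * y) ^ k / INR (Factorial.fact k))) * (Cmod y ^ m / INR (Factorial.fact m)))%R.
Proof.
  intros Hs. unfold fL.
  replace (x * (RtoC s * y)) with (RtoC s * (x * y)) by ring.
  replace (- (RtoC s * y)) with (RtoC s * - y) by ring.
  replace ((RtoC s * (x * y)) ^ k / (cfact k * cfact k)) with (tk (x * y) k s / cfact k)
    by (unfold tk; field; apply cfact_nz).
  fold (tk (- y) m s).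
  rewrite Cmod_mult, Cmod_mult.
  pose proof (tk_bound (- y) m s Hs) as H1. rewrite Cmod_opp in H1.
  pose proof (Rle_trans _ _ _ (Cmod_div_fact (tk (x * y) k s) k) (tk_bound (x * y) k s Hs)) as H2.
  pose proof (Cmod_ge_0 y). pose proof (Cmod_ge_0 (tk (- y) m s)). pose proof (Cmod_ge_0 (tk (x * y) k s / cfact k)).
  replace (Cmod y * (Cmod (x * y) ^ k / INR (Factorial.fact k)) * (Cmod y ^ m / INR (Factorial.fact m)))%R
    with (Cmod y * ((Cmod y ^ m / INR (Factorial.fact m)) * (Cmod (x * y) ^ k / INR (Factorial.fact k))))%R by ring.
  apply Rmult_le_compat_l; auto. apply Rmult_le_compat; auto.
Qed.


Lemma exp_series_scal (c r : R) : is_series (fun n => c * (r ^ n / INR (Factorial.fact n)))%R (c * exp r)%R.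
Proof.
  apply (is_series_scal_l (K:=R_AbsRing) (V:=R_NormedModule) c _ _ (exp_series_R r)).
Qed.

Lemma fI_series x y s : (0 <= s <= 1)%R ->
  is_series (fun n => fI x y n s) (y * (cexp (- (RtoC s * y)) * I0sqrt (x * (RtoC s * y)))).
Proof.
  intros _. set (c := y * cexp (- (RtoC s * y))).
  pose proof (is_series_scal_l (K:=C_AbsRing) (V:=C_NormedModule) c _ _ (I0_series (x * (RtoC s * y)))) as H.
  replace (y * (cexp (- (RtoC s * y)) * I0sqrt (x * (RtoC s * y)))) with (scal c (I0sqrt (x * (RtoC s * y)))).
  eapply is_series_ext. 2: exact H. intros n. unfold fI, c. change (@eq C (c * ((x * (RtoC s * y)) ^ n / (cfact n * cfact n))) (y * (cexp (- (RtoC s * y)) * ((x * (RtoC s * y)) ^ n / (cfact n * cfact n))))).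
  unfold c. ring.
  unfold c. change (@eq C (y * cexp (- (RtoC s * y)) * I0sqrt (x * (RtoC s * y))) (y * (cexp (- (RtoC s * y)) * I0sqrt (x * (RtoC s * y))))). ring.
Qed.

Lemma fL_series x y k s : (0 <= s <= 1)%R -> is_series (fun m => fL x y k m s) (fI x y k s).
Proof.
  intros _. set (T := (x * (RtoC s * y)) ^ k / (cfact k * cfact k)).
  pose proof (is_series_scal_l (K:=C_AbsRing) (V:=C_NormedModule) (y * T) _ _ (cexp_series (- (RtoC s * y)))) as H.
  replace (fI x y k s) with (scal (y * T) (cexp (- (RtoC s * y)))).
  eapply is_series_ext. 2: exact H. intros m. unfold fL. fold T.
  change (@eq C (y * T * ((- (RtoC s * y)) ^ m / cfact m)) (y * ((- (RtoC s * y)) ^ m / cfact m * T))). ring.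
  unfold fI. fold T. change (@eq C (y * T * cexp (- (RtoC s * y))) (y * (cexp (- (RtoC s * y)) * T))). ring.
Qed.

Lemma dL_series x y k : is_series (dL x y k) (cI x y k).
Proof.
  destruct (tbt (fL x y k) (fI x y k) (dL x y k)
     (fun m => (Cmod y * (Cmod (x * y) ^ k / INR (Factorial.fact k))) * (Cmod y ^ m / INR (Factorial.fact m)))%R
     _ (exp_series_scal _ _) (fun m s Hs => fL_bound x y k m s Hs) (dL_int x y k) (fL_series x y k)) as [I [H1 H2]].
  replace (cI x y k) with I. exact H1.
  pose proof (is_RInt_unique (V:=C_R_CompleteNormedModule) _ _ _ _ H2) as E1.
  pose proof (is_RInt_unique (V:=C_R_CompleteNormedModule) _ _ _ _ (cI_int x y k)) as E2.
  rewrite <- E1. exact E2.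
Qed.

Lemma dL_bound x y k m :
  (Cmod (dL x y k m) <= (Cmod (x * y) ^ k / INR (Factorial.fact k)) * (Cmod y * (Cmod y ^ m / INR (Factorial.fact m))))%R.
Proof.
  unfold dL. rewrite Cmod_mult, Cmod_R.
  assert (HD : DL x y k m = fL x y k m 1).
  { rewrite fL_eq. rewrite pow1. ring. }
  pose proof (fL_bound x y k m 1 ltac:(lra)) as Hb. rewrite <- HD in Hb.
  assert (Hi : (0 <= Rabs (/ INR (S (m + k))) <= 1)%R).
  { rewrite Rabs_pos_eq. split. left. apply Rinv_0_lt_compat, lt_0_INR; lia.
    rewrite <- Rinv_1. apply Rinv_le_contravar. lra. apply (le_INR 1); lia.
    left. apply Rinv_0_lt_compat, lt_0_INR; lia. }
  pose proof (Cmod_ge_0 (DL x y k m)).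
  eapply Rle_trans. apply Rmult_le_compat_l. auto. apply Hi. rewrite Rmult_1_r.
  eapply Rle_trans. apply Hb. right. ring.
Qed.

Lemma neg1_sq k : (- (1)) ^ k * (- (1)) ^ k = 1.
Proof. rewrite <- Cpow_mult_l. replace (- (1) * - (1)) with (RtoC 1) by ring. apply Cpow_1_l. Qed.

Lemma Cm1 : RtoC (-1) = - (1).
Proof. apply injective_projections; simpl; lra. Qed.

Lemma laguerre_term x y N k : (k <= N)%nat ->
  (-1) ^ N * y ^ S N / cfact (S N) * (RtoC (Binomial.C N k) * (-1) ^ k * x ^ k / cfact k) = dL x y k (N - k).
Proof.
  intros Hk. rewrite !Cm1. set (j := (N - k)%nat). replace N with (j + k)%nat by (unfold j; lia).
  unfold dL, DL. unfold Binomial.C. replace (j + k - k)%nat with j by lia.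
  assert (Hf : forall n, INR (Factorial.fact n) <> 0%R) by (intros; apply INR_fact_neq_0).
  assert (HS : INR (S (j + k)) <> 0%R) by (apply not_0_INR; lia).
  rewrite RtoC_div by (apply Rmult_integral_contrapositive; split; auto).
  rewrite RtoC_mult, RtoC_inv by auto.
  fold (cfact (j + k)). fold (cfact k). fold (cfact j).
  rewrite cfact_S. replace (S (j + k)) with (S (j + k))%nat by reflexivity.
  rewrite Cpow_S, !Cpow_add_r.
  replace (- y) with (- (1) * y) by ring. rewrite !Cpow_mult_l.
  assert (HS' : RtoC (INR (S (j + k))) <> 0) by (intros E; apply RtoC_inj in E; auto).
  pose proof (cfact_nz j). pose proof (cfact_nz k). pose proof (cfact_nz (j + k)).
  transitivity (((- (1)) ^ k * (- (1)) ^ k) * (y * ((- (1)) ^ j * y ^ j / cfact j * (x ^ k * y ^ k / (cfact k * cfact k))) * / RtoC (INR (S (j + k))))).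
  field. auto.
  rewrite neg1_sq. ring.
Qed.

Theorem mainTheorem16 (x y : C) :
  exists v : C,
    is_seg_integral (fun t => cexp (- t) * I0sqrt (x * t)) y v /\
    is_series (fun n => Rrem n y * x ^ n / cfact n) (cexp y * v) /\
    is_series (fun n => (-1) ^ n * Laguerre n x * y ^ (S n) / cfact (S n)) v.
Proof.
  destruct (tbt (fI x y) (fun s => y * (cexp (- (RtoC s * y)) * I0sqrt (x * (RtoC s * y)))) (cI x y)
     (fun n => Cmod y * exp (Cmod y) * (Cmod (x * y) ^ n / INR (Factorial.fact n)))%R
     _ (exp_series_scal _ _) (fun n s Hs => fI_bound x y n s Hs) (cI_int x y) (fI_series x y)) as [v [Hc Hint]].
  exists v. split; [|split].
  - unfold is_seg_integral. exact Hint.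
  - pose proof (is_series_scal_l (K:=C_AbsRing) (V:=C_NormedModule) (cexp y) _ _ Hc) as H.
    eapply is_series_ext. 2: exact H. intros n. unfold cI.
    change (@eq C (cexp y * (x ^ n / cfact n * cexp (- y) * Rrem n y)) (Rrem n y * x ^ n / cfact n)).
    transitivity ((cexp (- y) * cexp y) * (Rrem n y * x ^ n / cfact n)). field. apply cfact_nz.
    rewrite cexp_inv. ring.
  - assert (Hd := diag_series (dL x y) (cI x y) v
       (fun k => Cmod (x * y) ^ k / INR (Factorial.fact k))%R
       (fun m => Cmod y * (Cmod y ^ m / INR (Factorial.fact m)))%R (exp (Cmod (x * y))) (Cmod y * exp (Cmod y))%R).
    eapply is_series_ext. 2: apply Hd.
    + intros N. unfold Laguerre.
      change (@eq C (sum_n (G:=C_AbelianMonoid) (fun k => dL x y k (N - k)) N)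
         ((-1) ^ N * sum_n (G:=C_AbelianMonoid) (fun k => RtoC (Binomial.C N k) * (-1) ^ k * x ^ k / cfact k) N * y ^ S N / cfact (S N))).
      transitivity (((-1) ^ N * y ^ S N / cfact (S N)) * sum_n (G:=C_AbelianMonoid) (fun k => RtoC (Binomial.C N k) * (-1) ^ k * x ^ k / cfact k) N).
      2: { rewrite !Cm1. field. apply cfact_nz. }
      rewrite <- sum_n_cmul. apply sum_n_ext_loc. intros k Hk. symmetry. apply laguerre_term. exact Hk.
    + intros k. apply Rmult_le_pos. apply pow_le, Cmod_ge_0. left; apply Rinv_0_lt_compat, INR_fact_lt_0.
    + intros m. apply Rmult_le_pos. apply Cmod_ge_0. apply Rmult_le_pos. apply pow_le, Cmod_ge_0. left; apply Rinv_0_lt_compat, INR_fact_lt_0.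
    + apply exp_series_R.
    + apply exp_series_scal.
    + apply dL_bound.
    + apply dL_series.
    + exact Hc.
Qed.
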